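(* Let $G=H\oplus K$ be a $2$-sum or a $3$-sum of $2$-connected cubic graphs $H$ and $K$, where $H$ is a snark with $\pi(H)\ge 5$ and $K$ is $3$-edge-colourable. If $u$ is an apex of $H$ different from the distinguished vertex of $H$ for the $3$-sum (in the case of a $3$-sum), then $u$ is an apex of $G$.
   Context: Graphs are finite; loops and multiple edges are allowed. A snark is a $2$-connected cubic graph with no proper $3$-edge-colouring. The perfect matching index $\pi(G)$ is the smallest number of perfect matchings of $G$ whose union is $E(G)$. For a vertex $v$, $G^v$ denotes the graph obtained by inflating $v$ to a triangle (deleting $v$, adding a new triangle, and attaching the three edge-ends formerly at $v$ to its three distinct vertices). A vertex $v$ of a snark $G$ is an apex if $\pi(G^v)=4$. A $2$-sum with distinguished edges $e\in E(H)$, $f\in E(K)$ deletes $e,f$ and joins the $2$-valent vertices of $H-e$ to those of $K-f$ by two new independent edges. A $3$-sum with distinguished vertices $u'\in V(H)$, $v'\in V(K)$ deletes $u',v'$ and joins the three dangling edge-ends formerly at $u'$ bijectively to those formerly at $v'$. *)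

(* Defs.v *)
From mathcomp Require Import all_boot.
Set Implicit Arguments. Unset Strict Implicit. Unset Printing Implicit Defensive.

(* A graph: finite vertex type, finite edge type, and for each edge its two
   (unordered) ends.  A loop is an edge with equal ends. *)
Record graph := Graph { vert : finType; edge : finType; ends : edge -> vert * vert }.

Section Basics.
Variable G : graph.

(* darts = edge-ends (half-edges): (e,false) is the first end, (e,true) the second *)
Definition dart := (edge G * bool)%type.
Definition dend (d : dart) : vert G := if d.2 then (ends d.1).2 else (ends d.1).1.
Definition flip (d : dart) : dart := (d.1, ~~ d.2).

Definition incident (v : vert G) (e : edge G) : bool :=
  ((ends e).1 == v) || ((ends e).2 == v).
Definition is_loop (e : edge G) : bool := (ends e).1 == (ends e).2.

(* degree counts edge-ends, so a loop contributes 2 *)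
Definition deg (v : vert G) : nat := #|[set d : dart | dend d == v]|.
Definition cubic : Prop := forall v, deg v = 3.

Definition adj_minus (e : edge G) : rel (vert G) :=
  fun x y => [exists f, (f != e) && ((ends f == (x, y)) || (ends f == (y, x)))].
Definition adj : rel (vert G) :=
  fun x y => [exists f, (ends f == (x, y)) || (ends f == (y, x))].

Definition connected : Prop := forall x y, connect adj x y.
(* 2-connected cubic graphs are exactly the connected bridgeless ones *)
Definition two_connected : Prop :=
  connected /\ forall e x y, connect (adj_minus e) x y.

Definition perfect_matching (M : {set edge G}) : Prop :=
  (forall e, e \in M -> ~~ is_loop e) /\
  (forall v, #|[set e in M | incident v e]| = 1).

Definition pm_cover (k : nat) : Prop :=
  exists Ms : seq {set edge G},
    [/\ size Ms <= k, (forall M, M \in Ms -> perfect_matching M)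
      & forall e, exists2 M, M \in Ms & e \in M].

Definition pmi_eq (n : nat) : Prop := pm_cover n /\ forall m, pm_cover m -> n <= m.
(* pi(G) >= n  (pi = infinity if there is no cover) *)
Definition pmi_ge (n : nat) : Prop := forall m, pm_cover m -> n <= m.

Definition col3 : Prop :=
  exists c : edge G -> 'I_3,
    (forall e, ~~ is_loop e) /\
    (forall v e f, e != f -> incident v e -> incident v f -> c e != c f).

Definition snark : Prop := two_connected /\ cubic /\ ~ col3.

End Basics.

Section Inflate.
Variables (G : graph) (v : vert G).

Definition dart_at := {d : dart G | dend d == v}.
Definition ivert := ({x : vert G | x != v} + dart_at)%type.
(* triangle edges: one for each pair of distinct edge-ends at v *)
Definition tri_edge := {p : dart_at * dart_at | (enum_rank p.1 < enum_rank p.2)%N}.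
Definition iedge := (edge G + tri_edge)%type.

(* an old edge-end at v is reattached to its own new triangle vertex *)
Definition iend (d : dart G) : ivert :=
  (if dend d == v as c return (dend d == v) = c -> ivert
   then fun h => inr (exist (fun d => dend d == v) d h)
   else fun h => inl (exist (fun x => x != v) (dend d) (negbT h))) erefl.

Definition iends (e : iedge) : ivert * ivert :=
  match e with
  | inl e => (iend (e, false), iend (e, true))
  | inr p => (inr (val p).1, inr (val p).2)
  end.

Definition inflate : graph := Graph iends.
End Inflate.

Definition apex (G : graph) (v : vert G) : Prop :=
  snark G /\ pmi_eq (inflate v) 4.

(* Edge e = ab of H and f = cd of K are deleted and the new edges are
   a-c, b-d (sw = false) or a-d, b-c (sw = true); the new edges reuse the
   names e and f. *)
Section Sum2.
Variables (H K : graph) (e : edge H) (f : edge K) (sw : bool).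

Definition s2vert := (vert H + vert K)%type.
Definition s2edge := (edge H + edge K)%type.
Definition s2ends (g : s2edge) : s2vert * s2vert :=
  match g with
  | inl g => if g == e then (inl (ends e).1, inr (if sw then (ends f).2 else (ends f).1))
             else (inl (ends g).1, inl (ends g).2)
  | inr g => if g == f then (inl (ends e).2, inr (if sw then (ends f).1 else (ends f).2))
             else (inr (ends g).1, inr (ends g).2)
  end.
Definition sum2 : graph := Graph s2ends.
End Sum2.

Lemma nincid1 (G : graph) (u : vert G) (g : edge G) :
  ~~ incident u g -> (ends g).1 != u.
Proof. by rewrite /incident negb_or => /andP[]. Qed.
Lemma nincid2 (G : graph) (u : vert G) (g : edge G) :
  ~~ incident u g -> (ends g).2 != u.
Proof. by rewrite /incident negb_or => /andP[]. Qed.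
Lemma and3_2 (a b c : bool) : [&& a, b & c] -> b.
Proof. by case/and3P. Qed.
Lemma and3_3 (a b c : bool) : [&& a, b & c] -> c.
Proof. by case/and3P. Qed.

(* phi : dart H -> dart K is the bijection between the edge-ends at u' and
   those at v' (see bij_darts); the edge of H carrying the end d at u' and
   the edge of K carrying the end phi d at v' are merged into one edge. *)
Section Sum3.
Variables (H K : graph) (u' : vert H) (v' : vert K) (phi : dart H -> dart K).

Definition bij_darts : Prop :=
  [/\ forall d, dend d == u' -> dend (phi d) == v',
      {in [pred d | dend d == u'] &, injective phi}
    & forall d', dend d' == v' -> exists2 d, dend d == u' & phi d = d'].

Definition s3vert := ({x : vert H | x != u'} + {y : vert K | y != v'})%type.
Definition s3new (d : dart H) : bool :=
  [&& dend d == u', dend (flip d) != u' & dend (flip (phi d)) != v'].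
Definition s3edge :=
  ({g : edge H | ~~ incident u' g} + {g : edge K | ~~ incident v' g}
   + {d : dart H | s3new d})%type.
Definition s3ends (g : s3edge) : s3vert * s3vert :=
  match g with
  | inl (inl g) => (inl (exist (fun x => x != u') _ (nincid1 (valP g))),
                    inl (exist (fun x => x != u') _ (nincid2 (valP g))))
  | inl (inr g) => (inr (exist (fun x => x != v') _ (nincid1 (valP g))),
                    inr (exist (fun x => x != v') _ (nincid2 (valP g))))
  | inr d => (inl (exist (fun x => x != u') _ (and3_2 (valP d))),
              inr (exist (fun x => x != v') _ (and3_3 (valP d))))
  end.
Definition sum3 : graph := Graph s3ends.

Definition sum3_vH (u : vert H) (hu : u != u') : vert sum3 :=
  inl (exist (fun x => x != u') u hu).
End Sum3.

(* Main.v *)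
Require Import Defs.
From mathcomp Require Import all_boot zify.
Set Implicit Arguments. Unset Strict Implicit. Unset Printing Implicit Defensive.
Lemma card_setsum (T : finType) (P : pred T) : #|[set x | P x]| = \sum_(x : T) P x.
Proof.
rewrite -sum1_card big_mkcond /=. apply: eq_bigr => x _. by rewrite inE; case: (P x).
Qed.

Definition loopless (G : graph) := forall g : edge G, ~~ is_loop g.
Definition cnt (G : graph) (M : {set edge G}) (x : vert G) := #|[set g in M | incident x g]|.
Definition cross (G : graph) (S : {set vert G}) :=
  \sum_(g : edge G) (((ends g).1 \in S) != ((ends g).2 \in S)).

Lemma cnt_sum (G : graph) (M : {set edge G}) x :
  cnt M x = \sum_g ((g \in M) && incident x g).
Proof.
rewrite /cnt -card_setsum; apply: eq_card => g; by rewrite !inE.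
Qed.

Lemma deg_sum (G : graph) (x : vert G) :
  deg x = \sum_(g : edge G) (((ends g).1 == x) + ((ends g).2 == x)).
Proof.
rewrite /deg card_setsum.
transitivity (\sum_(p : edge G * bool) (dend (p.1, p.2) == x)); first by apply: eq_bigr => -[].
rewrite -(pair_bigA _ (fun g b => (dend (g, b) == x) : nat)) /=; apply: eq_bigr => g _.
by rewrite big_bool /= /dend /= addnC.
Qed.

Lemma incident_nl (G : graph) (x : vert G) g : ~~ is_loop g ->
  (incident x g : nat) = ((ends g).1 == x) + ((ends g).2 == x).
Proof.
rewrite /is_loop /incident; case: (ends g) => a b /= Hab.
case: (a =P x) => [Ha|Ha]; case: (b =P x) => [Hb|Hb] //.
by move: Hab; rewrite Ha Hb eqxx.
Qed.

Lemma cut_of_2conn (G : graph) : two_connected G ->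
  forall (S : {set vert G}) x y, x \in S -> y \notin S -> 2 <= cross S.
Proof.
move=> [Hc H2] S x y xS yS.
rewrite leqNgt; apply/negP => Hlt.
have Hcl : forall g0 : option (edge G),
   (forall g, ((ends g).1 \in S) != ((ends g).2 \in S) -> Some g = g0) -> False.
  move=> g0 Hg.
  have Hrel : closed (fun a b => [exists f, (Some f != g0) &&
                  ((ends f == (a, b)) || (ends f == (b, a)))]) S.
    move=> a b /existsP[f /andP[Hf Hab]].
    apply/eqP; apply: contraNT Hf => Hne; apply/eqP; apply: Hg.
    by case/orP: Hab => /eqP ->; rewrite //= eq_sym.
  case: g0 Hg Hrel => [g0|] Hg Hrel.
    by have := closed_connect Hrel (H2 g0 x y); rewrite xS (negbTE yS).
  by have := closed_connect Hrel (Hc x y); rewrite xS (negbTE yS).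
case: (pickP (fun g : edge G => ((ends g).1 \in S) != ((ends g).2 \in S))) => [g0 Hg0|Hn].
- apply: (Hcl (Some g0)) => g Hg; congr Some; apply/eqP/negPn/negP => Hne.
  move: Hlt; rewrite /cross (bigD1 g0) //= (bigD1 g) //= ?Hg0 ?Hg //.
  idtac.
- by apply: (Hcl None) => g Hg; move: (Hn g); rewrite (negbTE Hg).
Qed.

Lemma two_conn_of_cut (G : graph) :
  (forall (S : {set vert G}) x y, x \in S -> y \notin S -> 2 <= cross S) ->
  two_connected G.
Proof.
move=> Hcut.
have key : forall (r : rel (vert G)) (ok : edge G -> bool),
   (forall f a b, ok f -> ends f = (a, b) -> r a b /\ r b a) ->
   (forall S, 2 <= cross S -> exists f, ok f && (((ends f).1 \in S) != ((ends f).2 \in S))) ->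
   forall x y, connect r x y.
  move=> r ok Hok Hex x y; apply/negPn/negP => Hxy.
  pose S := [set z | connect r x z].
  have xS : x \in S by rewrite inE connect0.
  have yS : y \notin S by rewrite inE.
  have [f /andP[okf Hf]] := Hex S (Hcut S x y xS yS).
  move: Hf; case E: (ends f) => [a b] /=.
  have [rab rba] := Hok f a b okf E.
  rewrite !inE => Hf.
  case Ha: (connect r x a) Hf; case Hb: (connect r x b) => //= _.
  + by move: Hb; rewrite (connect_trans Ha (connect1 rab)).
  + by move: Ha; rewrite (connect_trans Hb (connect1 rba)).
split.
- rewrite /connected; apply: (key (@adj G) (fun _ => true)).
    move=> f a b _ E; split; apply/existsP; exists f; by rewrite E eqxx ?orbT.
  move=> S H2; rewrite /cross in H2.
  case: (pickP (fun g : edge G => ((ends g).1 \in S) != ((ends g).2 \in S))) => [g0 Hg0|Hn].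
    by exists g0.
  by move: H2; rewrite big1 // => g _; rewrite Hn.
- move=> e; apply: (key (@adj_minus G e) (fun f => f != e)).
    move=> f a b fe E; split; apply/existsP; exists f; by rewrite E fe eqxx ?orbT.
  move=> S H2; rewrite /cross in H2.
  case: (pickP (fun g : edge G => (g != e) && (((ends g).1 \in S) != ((ends g).2 \in S)))) => [g0 Hg0|Hn].
    by exists g0.
  move: H2; rewrite (bigD1 e) //= big1 ?addn0 => [|g ge]; first by case: (_ != _).
  by move: (Hn g); rewrite ge /= => /negbT/negbNE ->.
Qed.

Lemma sum_eq_in (T : finType) (S : {set T}) (a : T) :
  \sum_(x in S) ((a == x) : nat) = (a \in S).
Proof.
rewrite big_mkcond (bigD1 a) //= big1 ?addn0 => [|x xa].
  by rewrite eqxx; case: (a \in S).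
by rewrite eq_sym (negbTE xa); case: (x \in S).
Qed.

Lemma sum_eq1 (T : finType) (a : T) : \sum_(x : T) ((a == x) : nat) = 1.
Proof.
rewrite (bigD1 a) //= big1 ?addn0 ?eqxx // => x xa.
by rewrite eq_sym (negbTE xa).
Qed.

Lemma loopless_of (G : graph) : cubic G -> two_connected G -> loopless G.
Proof.
move=> Hc H2 g; apply/negP => Hg.
set v := (ends g).1.
have E : 3 = 2 * \sum_(h : edge G) (((ends h).1 == v) && ((ends h).2 == v)) + cross [set v].
  rewrite -(Hc v) deg_sum /cross big_distrr -big_split /=; apply: eq_bigr => h _.
  rewrite !inE; by case: eqP; case: eqP.
have L1 : 1 <= \sum_(h : edge G) (((ends h).1 == v) && ((ends h).2 == v)).
  rewrite (bigD1 g) //= /v; move/eqP: Hg => <-; rewrite eqxx.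
  by [].
have C1 : 0 < cross [set v].
  rewrite lt0n; apply/eqP => H0; move: E; rewrite H0; lia.
have [h Hh] : exists h : edge G, ((ends h).1 \in [set v]) != ((ends h).2 \in [set v]).
  case: (pickP (fun h : edge G => ((ends h).1 \in [set v]) != ((ends h).2 \in [set v]))) => [h Hh|Hn].
    by exists h.
  by move: C1; rewrite /cross big1 // => h _; rewrite Hn.
have : 2 <= cross [set v].
  case Eh1: ((ends h).1 \in [set v]) Hh; case Eh2: ((ends h).2 \in [set v]) => // _.
    by apply: (cut_of_2conn H2 (x:=(ends h).1) (y:=(ends h).2)); rewrite ?Eh1 ?Eh2.
  by apply: (cut_of_2conn H2 (x:=(ends h).2) (y:=(ends h).1)); rewrite ?Eh1 ?Eh2.
move: E L1; lia.
Qed.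

Lemma inc3 (G : graph) (x : vert G) : cubic G -> loopless G ->
  #|[set g | incident x g]| = 3.
Proof.
move=> Hc Hl; rewrite card_setsum -(Hc x) deg_sum; apply: eq_bigr => g _.
exact: incident_nl.
Qed.

Lemma dcount (G : graph) (M : {set edge G}) (S : {set vert G}) :
  (forall g, g \in M -> ~~ is_loop g) -> (forall x, x \in S -> cnt M x = 1) ->
  #|S| = \sum_(g in M) (((ends g).1 \in S) + ((ends g).2 \in S)).
Proof.
move=> Hl Hx.
rewrite -sum1_card.
transitivity (\sum_(x in S) \sum_(g : edge G) ((g \in M) && incident x g)).
  by apply: eq_bigr => x xS; rewrite -cnt_sum Hx.
rewrite exchange_big /= [RHS]big_mkcond /=; apply: eq_bigr => g _.
case gM: (g \in M) => /=; last by rewrite big1.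
transitivity (\sum_(x in S) (((ends g).1 == x) + ((ends g).2 == x))).
  by apply: eq_bigr => x _; rewrite incident_nl ?Hl.
by rewrite big_split /= !sum_eq_in.
Qed.

Lemma handshake (G : graph) : cubic G -> ~~ odd #|vert G|.
Proof.
move=> Hc.
have E : 3 * #|vert G| = 2 * #|edge G|.
  transitivity (\sum_(x : vert G) deg x).
    by rewrite (eq_bigr (fun _ => 3)) // sum_nat_const mulnC.
  transitivity (\sum_(g : edge G) 2).
    rewrite (eq_bigr (fun x => \sum_(g : edge G) (((ends g).1 == x) + ((ends g).2 == x)))); last first.
      by move=> x _; rewrite deg_sum.
    rewrite exchange_big /=; apply: eq_bigr => g _.
    by rewrite big_split /= !sum_eq1.
  by rewrite sum_nat_const mulnC.
apply/negP => Ho; move: E; rewrite -[#|vert G|]odd_double_half Ho.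
lia.
Qed.

Definition proper3 (G : graph) (c : edge G -> 'I_3) :=
  forall v e f, e != f -> incident v e -> incident v f -> c e != c f.

Lemma colour_class (G : graph) (c : edge G -> 'I_3) : cubic G -> loopless G ->
  proper3 c -> forall x i, cnt [set g | c g == i] x = 1.
Proof.
move=> Hc Hl Hp x i.
pose n (j : 'I_3) := #|[set g | incident x g && (c g == j)]|.
have En : forall j, cnt [set g | c g == j] x = n j.
  by move=> j; apply: eq_card => g; rewrite !inE andbC.
have Hle : forall j, n j <= 1.
  move=> j; apply/card_le1_eqP => g h; rewrite !inE => /andP[gx /eqP gj] /andP[hx /eqP hj].
  apply/eqP/negPn/negP => gh; move: (Hp x h g gh hx gx); by rewrite gj hj eqxx.
have Hs : \sum_(j : 'I_3) n j = 3.
  transitivity #|[set g | incident x g]|; last exact: inc3.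
  rewrite card_setsum.
  transitivity (\sum_(j : 'I_3) \sum_(g : edge G) (incident x g && (c g == j))).
    by apply: eq_bigr => j _; rewrite /n card_setsum.
  rewrite exchange_big /=; apply: eq_bigr => g _.
  case: (incident x g) => /=; last by rewrite big1.
  by rewrite sum_eq1.
rewrite En; apply/eqP; rewrite eqn_leq Hle /= lt0n; apply/eqP => H0.
move: Hs; rewrite (bigD1 i) //= H0 add0n => Hs.
have : \sum_(j | j != i) n j <= \sum_(j | j != i) 1 by apply: leq_sum => j _; apply: Hle.
rewrite sum1_card cardC1 card_ord Hs; lia.
Qed.

Lemma parity (G : graph) (c : edge G -> 'I_3) : cubic G -> loopless G -> proper3 c ->
  forall (S : {set vert G}) i,
  odd #|S| = odd (\sum_(g : edge G) ((c g == i) && (((ends g).1 \in S) != ((ends g).2 \in S)))).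
Proof.
move=> Hc Hl Hp S i.
rewrite (@dcount G [set g | c g == i] S) //; last by move=> x _; apply: colour_class.
rewrite big_mkcond /=.
rewrite (eq_bigr (fun g => ((c g == i) && (((ends g).1 \in S) != ((ends g).2 \in S)))
          + 2 * ((c g == i) && ((ends g).1 \in S) && ((ends g).2 \in S)))); last first.
  move=> g _; rewrite inE; case: (c g == i); case: ((ends g).1 \in S); by case: ((ends g).2 \in S).
by rewrite big_split /= -big_distrr /= oddD oddM /= addbF.
Qed.


Lemma cnt_two (H : graph) (M : {set edge H}) x a b :
  a != b -> a \in M -> b \in M -> incident x a -> incident x b -> 1 < cnt M x.
Proof.
move=> ab aM bM xa xb; rewrite /cnt.
apply: (leq_trans _ (subset_leq_card (A := [set a; b]) _)); first by rewrite cards2 ab.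
apply/subsetP => z; rewrite !inE => /orP[/eqP->|/eqP->]; by rewrite ?aM ?bM ?xa ?xb.
Qed.

Lemma c13 c T : 3 = c + 2 * T -> c = 1 \/ c = 3.
Proof. lia. Qed.
Lemma c1 c T : 3 = c + 2 * T -> c <= 1 -> c = 1.
Proof. lia. Qed.

Lemma sum_andeq (T : finType) (P : pred T) (a : T) :
  \sum_(g : T) (P g && (a == g)) = P a.
Proof.
rewrite (bigD1 a) //= eqxx andbT big1 ?addn0 // => g ga.
by rewrite eq_sym (negbTE ga) andbF.
Qed.

Section Infl.
Variables (G : graph) (v : vert G).
Local Notation IG := (@inflate G v).
Local Notation D := (dart_at v).

Lemma iend_spec (d : dart G) :
  match iend v d with
  | inl x => val x = dend d
  | inr p => val p = d
  end.
Proof.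
rewrite /iend; move: (erefl (dend d == v)); case: {2 3}(dend d == v) => h //=.
Qed.

Lemma iend_L d (x : {x | x != v}) : (iend v d == inl x) = (dend d == val x).
Proof.
have := iend_spec d; case: (iend v d) => [y|p] /= H.
  by rewrite -H; apply/eqP/eqP => [[->]|/val_inj ->].
rewrite -H (eqP (valP p)) /=; apply/esym/negbTE; rewrite eq_sym; exact: (valP x).
Qed.

Lemma iend_R d (p : D) : (iend v d == inr p) = (d == val p).
Proof.
have := iend_spec d; case: (iend v d) => [y|p'] /= H.
  apply/esym/negbTE/eqP => E; have Hy : sval y != v := proj2_sig y.
  by rewrite H E (eqP (valP p)) eqxx in Hy.
by rewrite -H; apply/eqP/eqP => [[->]|/val_inj ->].
Qed.

Lemma iend_S d : (if iend v d is inr _ then true else false) = (dend d == v).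
Proof.
have := iend_spec d; case: (iend v d) => [y|p] /= H.
  have Hy : sval y != v := proj2_sig y.
  by rewrite -H; apply/esym/negbTE.
by rewrite -H (eqP (valP p)) eqxx.
Qed.

Lemma inc_LL (x : {x | x != v}) g :
  @incident IG (inl x) (inl g) = incident (val x) g.
Proof. by rewrite /incident /= !iend_L. Qed.

Lemma inc_RL (p : D) g : @incident IG (inr p) (inl g) = ((val p).1 == g).
Proof.
rewrite /incident /= !iend_R; case: p => [[h b] hp] /=.
by move: hp; case: b => _; rewrite /= !xpair_eqE /= ?andbT ?andbF ?orbF // eq_sym.
Qed.

Lemma inc_LR (x : {x | x != v}) t : @incident IG (inl x) (inr t) = false.
Proof. by []. Qed.

Lemma inc_RR (p : D) (t : tri_edge v) :
  @incident IG (inr p) (inr t) = ((val t).1 == p) || ((val t).2 == p).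
Proof. by []. Qed.

Lemma loopless_infl : loopless G -> loopless IG.
Proof.
move=> Hl [g|t]; rewrite /is_loop /=.
  have := iend_spec (g, false); have := iend_spec (g, true).
  case: (iend v (g, true)) => [y|q]; case: (iend v (g, false)) => [x|p] //= H1 H2.
    apply/negP => /eqP [] /(congr1 (@proj1_sig _ _)); rewrite H1 H2 /dend /= => E.
    by move: (Hl g); rewrite /is_loop E eqxx.
  by apply/negP => /eqP [] /(congr1 (@proj1_sig _ _)); rewrite H1 H2.
apply/negP => /eqP [] E; have := proj2_sig t; by rewrite /= E ltnn.
Qed.

Lemma cardD : cubic G -> #|{: D}| = 3.
Proof.
move=> Hc; rewrite card_sig -(Hc v) /deg; apply: eq_card => d; by rewrite !inE.
Qed.

Lemma third (p q : D) : cubic G -> p != q ->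
  exists r : D, [/\ r != p, r != q & forall z : D, [|| z == p, z == q | z == r]].
Proof.
move=> Hc pq.
have : #|~: [set p; q]| == 1.
  have := cardsC [set p; q]; rewrite cards2 pq /=.
  have := cardD Hc; rewrite /= => ->.
  by move=> H; apply/eqP; lia.
case/cards1P => r Hr.
have : r \in ~: [set p; q] by rewrite Hr inE.
rewrite !inE negb_or => /andP[rp rq].
exists r; split => // z.
case: (eqVneq z p) => [->|zp] //=.
case: (eqVneq z q) => [->|zq] //=.
have : z \in ~: [set p; q] by rewrite !inE negb_or zp zq.
by rewrite Hr inE.
Qed.

Lemma tri_ex (p q : D) : p != q ->
  exists t : tri_edge v,
    ((val t).1 == p) && ((val t).2 == q) || ((val t).1 == q) && ((val t).2 == p).
Proof.
move=> pq.
case: (ltngtP (enum_rank p) (enum_rank q)) => H.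
- by exists (exist _ (p, q) H); rewrite /= !eqxx.
- by exists (exist _ (q, p) H); rewrite /= !eqxx orbT.
- by move/ord_inj/enum_rank_inj: H => E; rewrite E eqxx in pq.
Qed.

Lemma tri_uniq (t t' : tri_edge v) :
  (sval t).1 \in [:: (sval t').1; (sval t').2] ->
  (sval t).2 \in [:: (sval t').1; (sval t').2] -> t = t'.
Proof.
case: t => [[a b] Hab]; case: t' => [[a' b'] Hab'] /=.
rewrite !inE => /orP[/eqP Ha|/eqP Ha] /orP[/eqP Hb|/eqP Hb]; subst.
- by have := Hab; rewrite /= ltnn.
- by congr exist; apply: eq_irrelevance.
- have := Hab; have := Hab'; rewrite /=; lia.
- by have := Hab; rewrite /= ltnn.
Qed.

Lemma dart_edge_inj : loopless G -> forall p q : D, (sval p).1 = (sval q).1 -> p = q.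
Proof.
move=> Hl [[h b] Hp] [[h' b'] Hq] /= E; subst h'.
case: (eqVneq b b') => [E|Ne].
  by subst; congr exist; apply: eq_irrelevance.
exfalso; move: (Hl h) Hp Hq; rewrite /is_loop /dend /=.
by case: b Ne; case: b' => //= _ H /eqP E1 /eqP E2; rewrite E1 E2 eqxx in H.
Qed.

Definition dv (h : edge G) : dart G := if (ends h).1 == v then (h, false) else (h, true).

Lemma dv_at h : incident v h -> dend (dv h) == v.
Proof.
rewrite /incident /dv /dend; case: eqP => [->|_] //=.
Qed.

Lemma ex_dart h : incident v h -> exists p : D, (sval p).1 = h.
Proof. move=> H; by exists (exist _ (dv h) (dv_at H)); rewrite /= /dv; case: ifP. Qed.

Lemma dart_inc (p : D) : incident v (sval p).1.
Proof.
case: p => [[h b] Hp] /=; move: Hp; rewrite /incident /dend /=.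
by case: b => /eqP ->; rewrite eqxx ?orbT.
Qed.

Definition genm (M : {set edge G}) :=
  (forall x, x != v -> cnt M x = 1) /\ (cnt M v = 1 \/ cnt M v = 3).

Definition good_cover (k : nat) :=
  exists Ms : seq {set edge G},
  [/\ size Ms <= k, forall M, M \in Ms -> genm M,
      forall g, exists2 M, M \in Ms & g \in M
    & forall g, incident v g -> exists2 M, M \in Ms & (g \in M) && (cnt M v == 1)].

Definition restr (M : {set edge IG}) : {set edge G} := [set g | inl g \in M].

Lemma cnt_restr (M : {set edge IG}) (x : {x | x != v}) :
  cnt (restr M) (sval x) = @cnt IG M (inl x).
Proof.
rewrite !cnt_sum big_sumType /= [X in _ = _ + X]big1 ?addn0.
  by apply: eq_bigr => g _; rewrite inE inc_LL.
by move=> t _; rewrite inc_LR andbF.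
Qed.


Lemma cardS3 : cubic G -> #|[set z : vert IG | if z is inr _ then true else false]| = 3.
Proof.
move=> Hc; rewrite card_setsum big_sumType /= big1 // add0n.
rewrite -(cardD Hc) -sum1_card; by apply: eq_bigl.
Qed.

Lemma cnt_v (M : {set edge IG}) : cubic G -> loopless G -> perfect_matching M ->
  3 = cnt (restr M) v + 2 * \sum_(t : tri_edge v) (inr t \in M).
Proof.
move=> Hc Hl [PM1 PM2].
rewrite -{1}(cardS3 Hc) (@dcount IG M) //.
rewrite big_mkcond big_sumType /= cnt_sum big_distrr /=; congr (_ + _).
  apply: eq_bigr => g _; rewrite inE; case: ifP => E; last first.
    by have -> : (g \in restr M) = false by rewrite inE; exact: E.
  rewrite inE iend_S inE iend_S /dend /= -incident_nl //; congr nat_of_bool.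
  by symmetry; apply: andb_idl => _; exact: E.
rewrite (eq_bigr (fun t => 2 * (inr t \in M))); last by move=> t _; rewrite !inE; case: (inr t \in M).
by [].
by move=> x _; exact: PM2.

Qed.

Lemma infl_to_good k : cubic G -> loopless G -> pm_cover IG k -> good_cover k.
Proof.
move=> Hc Hl [Ms [Hsz HM Hcov]].
exists (map restr Ms); split.
- by rewrite size_map.
- move=> M /mapP [Ms' HMs' ->]; have PM := HM Ms' HMs'; split.
    move=> x xv; have := cnt_restr Ms' (exist _ x xv); rewrite /= => ->.
    exact: PM.2.
  exact: c13 (cnt_v Hc Hl PM).
- move=> g; have [M' HM' gM'] := Hcov (inl g).
  by exists (restr M'); [apply: map_f | rewrite inE].
- move=> g gv.
  have [p Hp] := ex_dart gv.
  have [q qp] : exists q : D, q != p.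
    have : 0 < #|~: [set p]|.
      have := cardsC [set p]; rewrite cards1; have := cardD Hc; rewrite /= => ->; lia.
    case/card_gt0P => q; rewrite !inE => qp; by exists q.
  have [r [rq rp Hall]] := third Hc qp.
  have [t Ht] := tri_ex rq.
  have [Mt HMt tMt] := Hcov (inr t).
  have PMt := HM Mt HMt.
  have notin : forall z : D, z \in [:: r; q] -> inl (sval z).1 \notin Mt.
    move=> z Hz; apply/negP => zin.
    have : 1 < @cnt IG Mt (inr z).
      apply: (@cnt_two IG Mt (inr z) (inl (sval z).1) (inr t)).
      - by [].
      - exact: zin.
      - exact: tMt.
      - by rewrite inc_RL eqxx.
      rewrite inc_RR; move: Hz Ht; rewrite !inE.
      by case/orP => /eqP ->; case/orP => /andP[/eqP -> /eqP ->]; rewrite eqxx ?orbT.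
    by rewrite /cnt (PMt.2 (inr z)).
  have Hin : forall h, h \in restr Mt -> incident v h -> h = g.
    move=> h; rewrite inE => hM hv; have [z Hz] := ex_dart hv.
    move: (Hall z) => /or3P [/eqP E|/eqP E|/eqP E]; subst z.
    - by move: (notin q); rewrite !inE eqxx orbT Hz hM => /(_ isT).
    - by rewrite -Hz Hp.
    - by move: (notin r); rewrite !inE eqxx Hz hM => /(_ isT).
  have Hc3 := cnt_v Hc Hl PMt.
  have Hle : cnt (restr Mt) v <= 1.
    apply/card_le1_eqP => h h'; rewrite [h \in _]inE [h' \in _]inE => /andP[hM hv] /andP[h'M h'v].
    by rewrite (Hin h hM hv) (Hin h' h'M h'v).
  have H1 : cnt (restr Mt) v = 1 by apply: c1 Hc3 Hle.
  exists (restr Mt); first by apply: map_f.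
  rewrite H1 eqxx andbT.
  have : 0 < cnt (restr Mt) v by rewrite H1.
  case/card_gt0P => h; rewrite !inE => /andP[hM hv].
  by have := Hin h; rewrite inE => /(_ hM hv) <-.
Qed.


Definition star (M : {set edge G}) : {set edge IG} :=
  [set gs : edge IG | match gs with
                      | inl g => g \in M
                      | inr t => ((sval (sval t).1).1 \notin M) && ((sval (sval t).2).1 \notin M)
                      end].

Lemma star_pm M : cubic G -> loopless G -> genm M -> perfect_matching (star M).
Proof.
move=> Hc Hl [Hx Hv]; split; first by move=> gs _; exact: loopless_infl.
move=> [x|p]; rewrite -/(cnt _ _) cnt_sum big_sumType /=.
  rewrite [X in _ + X = _]big1 ?addn0; last by move=> t _; rewrite inc_LR andbF.
  rewrite -(Hx (sval x) (proj2_sig x)) cnt_sum; apply: eq_bigr => g _.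
  by rewrite inc_LL inE.
rewrite (eq_bigr (fun g => ((g \in M) && ((sval p).1 == g)) : nat)); last first.
  by move=> g _; rewrite inc_RL inE.
rewrite sum_andeq.
case: (boolP ((sval p).1 \in M)) => pM.
  rewrite big1 // => t _; rewrite inc_RR inE.
  by case/orP: (orbN ((sval t).1 == p)) => [/eqP->|/negbTE->]; rewrite ?pM ?andbF //=;
     case: ((sval t).2 =P p) => [->|]; rewrite ?pM ?andbF.
rewrite add0n.
have Hv1 : cnt M v = 1.
  case: Hv => // H3; exfalso.
  have sub : [set h in M | incident v h] \subset [set h | incident v h].
    by apply/subsetP => h; rewrite !inE => /andP[].
  have E : #|[set h in M | incident v h]| = #|[set h | incident v h]|.
    by rewrite inc3 //; exact: H3.
  move/(subset_cardP E): sub => Eq.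
  by move: (Eq (sval p).1); rewrite !inE dart_inc (negbTE pM).
have [h0 /andP[h0M h0v]] : exists h0, (h0 \in M) && incident v h0.
  have : 0 < cnt M v by rewrite Hv1.
  by case/card_gt0P => h0; rewrite inE => H; exists h0.
have [z0 Hz0] := ex_dart h0v.
have pz0 : p != z0.
  by apply/eqP => E; move: pM; rewrite E Hz0 h0M.
have [r [rp rz0 Hall]] := third Hc pz0.
have rM : (sval r).1 \notin M.
  apply/negP => rM.
  have : 1 < cnt M v.
    apply: (@cnt_two G M v h0 (sval r).1) => //; last exact: dart_inc.
    by rewrite -Hz0; apply/eqP => /(dart_edge_inj Hl) E; rewrite E eqxx in rz0.
  by rewrite Hv1.
have pr : p != r by rewrite eq_sym.
have [t0 Ht0] := tri_ex pr.
have Hend : forall e : D, (sval e).1 \notin M -> e \in [:: (sval t0).1; (sval t0).2].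
  move=> e eM; have : e != z0 by apply/eqP => E; move: eM; rewrite E Hz0 h0M.
  move: (Hall e) Ht0; rewrite !inE.
  case/or3P => /eqP ->; rewrite ?eqxx //;
  by case/orP => /andP[/eqP -> /eqP ->]; rewrite eqxx ?orbT.
transitivity #|[set t : tri_edge v | (inr t \in star M) && @incident IG (inr p) (inr t)]|.
  by rewrite card_setsum.
rewrite (_ : [set t | _] = [set t0]) ?cards1 //.
apply/setP => t; rewrite !inE inc_RR.
apply/andP/eqP => [[Hs Hpt]|->].
  by move: Hs => /andP[H1 H2]; apply: tri_uniq; apply: Hend.
move: Ht0; case/orP => /andP[/eqP E1 /eqP E2]; rewrite E1 E2 eqxx ?orbT; split => //; by rewrite ?pM ?rM.
Qed.

Lemma good_to_infl k : cubic G -> loopless G -> good_cover k -> pm_cover IG k.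
Proof.
move=> Hc Hl [Ms [Hsz HM Hcov Hd]].
exists (map star Ms); split.
- by rewrite size_map.
- by move=> Ms' /mapP[M HMM ->]; apply: star_pm => //; exact: HM.
- move=> [g|t].
    have [M HMM gM] := Hcov g; exists (star M); first by apply: map_f.
    by rewrite inE.
  have ab : (sval t).1 != (sval t).2.
    by apply/eqP => E; have := proj2_sig t; rewrite /= E ltnn.
  have [c [ca cb Hall]] := third Hc ab.
  have [M HMM /andP[cM /eqP Hv1]] := Hd _ (dart_inc c).
  have notM : forall e : D, e != c -> (sval e).1 \notin M.
    move=> e ec; apply/negP => eM.
    have : 1 < cnt M v.
      apply: (@cnt_two G M v (sval e).1 (sval c).1) => //; try exact: dart_inc.
      by apply/eqP => /(dart_edge_inj Hl) E; rewrite E eqxx in ec.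
    by rewrite Hv1.
  exists (star M); first by apply: map_f.
  by rewrite inE /= !notM // eq_sym.
Qed.

Lemma good_col3 k : cubic G -> loopless G -> good_cover k -> k <= 3 -> col3 G.
Proof.
move=> Hc Hl [Ms [Hsz HM Hcov Hd]] Hk.
have allPM : forall M, M \in Ms -> cnt M v = 1.
  move=> M0 HM0; case: (HM M0 HM0) => _ [//|H3]; exfalso.
  pose P := [set M in Ms | cnt M v == 1].
  have HP : 3 <= #|P|.
    have E1 : \sum_(M in P) cnt M v = #|P|.
      by rewrite -sum1_card; apply: eq_bigr => M; rewrite inE => /andP[_ /eqP].
    rewrite -E1.
    have E2 : \sum_(M in P) cnt M v =
              \sum_(g : edge G) \sum_(M in P) ((g \in M) && incident v g).
      by rewrite exchange_big /=; apply: eq_bigr => M _; rewrite cnt_sum.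
    rewrite E2 -{1}(inc3 v Hc Hl) card_setsum; apply: leq_sum => g _.
    case: (boolP (incident v g)) => gv //.
    have [M1 HM1 /andP[gM1 /eqP c1]] := Hd g gv.
    have M1P : M1 \in P by rewrite inE HM1 c1 eqxx.
    by rewrite (bigD1 M1) //= gM1.
  have sub : P \subset [set M in Ms] :\ M0.
    apply/subsetP => M; rewrite !inE => /andP[HMs /eqP c1]; rewrite HMs andbT.
    by apply/eqP => E; move: c1; rewrite E H3.
  have h1 := subset_leq_card sub.
  have h2 := cardsD1 M0 [set M in Ms]; rewrite inE HM0 in h2.
  have h3 : #|[set M in Ms]| <= size Ms by rewrite cardsE; apply: card_size.
  move: HP h1 h2 h3 Hsz Hk; clear; lia.
have cntall : forall M x, M \in Ms -> cnt M x = 1.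
  move=> M x HMs; case: (eqVneq x v) => [->|xv]; first exact: allPM.
  by apply: (HM M HMs).1.
have hasg : forall g : edge G, has (fun M : {set edge G} => g \in M) Ms.
  by move=> g; have [M HMs gM] := Hcov g; apply/hasP; exists M.
exists (fun g => inord (find (fun M : {set edge G} => g \in M) Ms)); split => // x e f ef xe xf.
apply/negP => /eqP E.
have ltf : forall g, find (fun M : {set edge G} => g \in M) Ms < 3.
  by move=> g; apply: (leq_trans _ (leq_trans Hsz Hk)); rewrite -has_find.
move/(congr1 (@nat_of_ord 3)): E; rewrite !inordK ?ltf // => E.
have eM := nth_find set0 (hasg e); have fM := nth_find set0 (hasg f).
rewrite -E in fM.
have HMs : nth set0 Ms (find (fun M : {set edge G} => e \in M) Ms) \in Ms by apply: mem_nth; rewrite -has_find.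
have := cntall _ x HMs.
have := @cnt_two G _ x e f ef eM fM xe xf.
move=> H1 H2; by rewrite H2 in H1.
Qed.

End Infl.

Lemma third_gen (T : finType) (p q : T) : #|T| = 3 -> p != q ->
  exists r : T, [/\ r != p, r != q & forall z : T, [|| z == p, z == q | z == r]].
Proof.
move=> HT pq.
have : #|~: [set p; q]| == 1.
  have := cardsC [set p; q]; rewrite cards2 pq /= HT.
  by move=> H; apply/eqP; lia.
case/cards1P => r Hr.
have : r \in ~: [set p; q] by rewrite Hr inE.
rewrite !inE negb_or => /andP[rp rq].
exists r; split => // z.
case: (eqVneq z p) => [->|zp] //=.
case: (eqVneq z q) => [->|zq] //=.
have : z \in ~: [set p; q] by rewrite !inE negb_or zp zq.
by rewrite Hr inE.
Qed.

Lemma other_gen (T : finType) (p : T) : 1 < #|T| -> exists q : T, q != p.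
Proof.
move=> HT; have : 0 < #|~: [set p]|.
  have := cardsC [set p]; rewrite cards1; lia.
by case/card_gt0P => q; rewrite !inE => qp; exists q.
Qed.

Lemma inl_eq (A B : eqType) (x y : A) : (@inl A B x == inl y) = (x == y).
Proof. by apply/eqP/eqP => [[]|->]. Qed.
Lemma inr_eq (A B : eqType) (x y : B) : (@inr A B x == inr y) = (x == y).
Proof. by apply/eqP/eqP => [[]|->]. Qed.
Lemma inlr_eq (A B : eqType) (x : A) (y : B) : (inl x == inr y) = false.
Proof. by []. Qed.
Lemma inrl_eq (A B : eqType) (x : A) (y : B) : (inr y == inl x) = false.
Proof. by []. Qed.

Lemma arith2 (al be ga de pA nA pB nB : bool) (IH IK : nat) :
  al ==> pA -> ~~ al ==> nA -> be ==> pA -> ~~ be ==> nA ->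
  ga ==> pB -> ~~ ga ==> nB -> de ==> pB -> ~~ de ==> nB ->
  (pA && nA) ==> (2 <= (al != be) + IH) -> (pB && nB) ==> (2 <= (ga != de) + IK) ->
  pA || pB -> nA || nB ->
  2 <= (al != ga) + (be != de) + IH + IK.
Proof.
by case: al; case: be; case: ga; case: de; case: pA; case: nA; case: pB; case: nB => //=; lia.
Qed.

Lemma card_inr (A B : finType) :
  #|[set z : A + B | if z is inr _ then true else false]| = #|B|.
Proof. rewrite card_setsum big_sumType /= big1 // add0n -sum1_card; by apply: eq_bigl. Qed.
Lemma card_inl (A B : finType) :
  #|[set z : A + B | if z is inl _ then true else false]| = #|A|.
Proof. rewrite card_setsum big_sumType /= [X in _ + X]big1 // addn0 -sum1_card; by apply: eq_bigl. Qed.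

Section Sum2Sec.
Variables (H K : graph) (e : edge H) (f : edge K) (sw : bool).
Local Notation G := (@sum2 H K e f sw).
Local Notation a := (ends e).1.
Local Notation b := (ends e).2.
Local Notation cc := (if sw then (ends f).2 else (ends f).1).
Local Notation dd := (if sw then (ends f).1 else (ends f).2).

Lemma incLL x g : @incident G (inl x) (inl g) = if g == e then a == x else incident x g.
Proof. by rewrite /incident /=; case: (g == e) => /=; rewrite ?inl_eq ?inr_eq ?orbF. Qed.
Lemma incLR x k : @incident G (inl x) (inr k) = (k == f) && (b == x).
Proof. by rewrite /incident /=; case: (k == f) => /=; rewrite ?inl_eq ?inr_eq ?orbF. Qed.
Lemma incRL y g : @incident G (inr y) (inl g) = (g == e) && (cc == y).
Proof. by rewrite /incident /=; case: (g == e) => /=; rewrite ?inl_eq ?inr_eq ?orbF. Qed.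
Lemma incRR y k : @incident G (inr y) (inr k) = if k == f then dd == y else incident y k.
Proof. by rewrite /incident /=; case: (k == f) => /=; rewrite ?inl_eq ?inr_eq ?orbF. Qed.

Lemma sumG (F : edge G -> nat) :
  \sum_(g' : edge G) F g' =
  F (inl e) + F (inr f) + \sum_(g | g != e) F (inl g) + \sum_(k | k != f) F (inr k).
Proof. rewrite big_sumType /= (bigD1 e) //= (bigD1 f) //=; lia. Qed.

Lemma cubic_sum2 : cubic H -> cubic K -> cubic G.
Proof.
move=> cH cK [x|y]; rewrite deg_sum sumG /= !eqxx /= ?inl_eq ?inr_eq ?inrl_eq ?inlr_eq.
- rewrite (eq_bigr (fun g => ((ends g).1 == x) + ((ends g).2 == x))); last first.
    by move=> g ge; rewrite /= (negbTE ge) /= !inl_eq.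
  rewrite [X in _ + X = _]big1 ?addn0; last by move=> k kf; rewrite /= (negbTE kf) /= ?inrl_eq.
  rewrite -(cH x) deg_sum [in RHS](bigD1 e) //=; lia.
- rewrite (eq_bigr (fun k => ((ends k).1 == y) + ((ends k).2 == y))) /=; last first.
    by move=> k kf; rewrite /= (negbTE kf) /= !inr_eq.
  rewrite [X in _ + X + _ = _]big1 ?addn0; last by move=> g ge; rewrite /= (negbTE ge) /= ?inlr_eq.
  rewrite -(cK y) deg_sum [in RHS](bigD1 f) //=; case: sw; lia.
Qed.

Lemma two_conn_sum2 : two_connected H -> two_connected K -> two_connected G.
Proof.
move=> cH cK; apply: two_conn_of_cut => S x y xS yS.
pose A := [set z | inl z \in S]; pose B := [set z | inr z \in S].
have EG : cross S = ((a \in A) != (cc \in B)) + ((b \in A) != (dd \in B))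
     + \sum_(g | g != e) (((ends g).1 \in A) != ((ends g).2 \in A))
     + \sum_(k | k != f) (((ends k).1 \in B) != ((ends k).2 \in B)).
  rewrite /cross sumG /= !eqxx /= !inE; congr (_ + _ + _ + _).
    by apply: eq_bigr => g ge; rewrite /= (negbTE ge) /= !inE.
  by apply: eq_bigr => k kf; rewrite /= (negbTE kf) /= !inE.
have EH : cross A = ((a \in A) != (b \in A))
     + \sum_(g | g != e) (((ends g).1 \in A) != ((ends g).2 \in A)).
  by rewrite /cross (bigD1 e).
have EK : cross B = ((cc \in B) != (dd \in B))
     + \sum_(k | k != f) (((ends k).1 \in B) != ((ends k).2 \in B)).
  by rewrite /cross (bigD1 f) //; case: sw => //=; case: (_ \in B); case: (_ \in B).
have hA : forall p q, p \in A -> q \notin A -> 2 <= cross A.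
  by move=> p q; apply: cut_of_2conn.
have hB : forall p q, p \in B -> q \notin B -> 2 <= cross B.
  by move=> p q; apply: cut_of_2conn.
rewrite EG.
apply: (@arith2 _ _ _ _ [exists p, p \in A] [exists p, p \notin A]
                        [exists p, p \in B] [exists p, p \notin B]).
- by apply/implyP => H1; apply/existsP; exists a.
- by apply/implyP => H1; apply/existsP; exists a.
- by apply/implyP => H1; apply/existsP; exists b.
- by apply/implyP => H1; apply/existsP; exists b.
- by apply/implyP => H1; apply/existsP; exists cc.
- by apply/implyP => H1; apply/existsP; exists cc.
- by apply/implyP => H1; apply/existsP; exists dd.
- by apply/implyP => H1; apply/existsP; exists dd.
- apply/implyP => /andP[/existsP[p Hp] /existsP[q Hq]]; rewrite -EH; exact: hA Hp Hq.
- apply/implyP => /andP[/existsP[p Hp] /existsP[q Hq]]; rewrite -EK; exact: hB Hp Hq.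
- case: x xS => [x|x] xS; apply/orP; [left|right]; apply/existsP; exists x; by rewrite inE.
- case: y yS => [y|y] yS; apply/orP; [left|right]; apply/existsP; exists y; by rewrite inE.
Qed.

Lemma nocol_sum2 : cubic H -> cubic K -> loopless H -> ~ col3 H -> ~ col3 G.
Proof.
move=> cH cK lH nH [c [lG pc]].
have cG := cubic_sum2 cH cK.
pose S := [set z : vert G | if z is inr _ then true else false].
have evenS : ~~ odd #|S|.
  have -> : #|S| = #|vert K|.
    exact: (card_inr (vert H) (vert K)).
  exact: handshake.
have par := parity cG lG pc S (c (inl e)).
rewrite (negbTE evenS) /cross sumG /= !eqxx /= !inE /= in par.
rewrite big1 ?addn0 in par; last first.
  by move=> k kf; rewrite /= (negbTE kf) /= !inE /= andbF.
rewrite big1 ?addn0 in par; last first.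
  by move=> g ge; rewrite /= (negbTE ge) /= !inE /= andbF.
have Ecf : c (inr f) = c (inl e).
  by apply/eqP; move: par; case: (c (inr f) == c (inl e)).
apply: nH; exists (fun g => c (inl g)); split => // x g h gh xg xh.
pose sg (g : edge H) : edge G := if (g == e) && (a != x) then inr f else inl g.
have Hs : forall g, incident x g -> @incident G (inl x) (sg g) /\ c (sg g) = c (inl g).
  move=> g0 xg0; rewrite /sg; case: (eqVneq g0 e) => [E|ne] /=; last by rewrite incLL (negbTE ne).
  subst g0; case: (eqVneq a x) => [E|ne] /=; first by rewrite incLL eqxx E.
  rewrite incLR eqxx Ecf; split => //.
  by move: xg0; rewrite /incident (negbTE ne).
have [xg' cg] := Hs g xg; have [xh' ch] := Hs h xh.
rewrite -cg -ch; apply: (pc (inl x)) => //.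
rewrite /sg; case: (eqVneq g e) gh => [->|ge] gh; case: (eqVneq h e) gh => [->|he] gh;
  first by move: gh; rewrite ?eqxx.
- by rewrite ?eqxx ?(negbTE he) /=; case: (a != x) => //=; rewrite inl_eq eq_sym.
- by rewrite ?eqxx ?(negbTE ge) /=; case: (a != x) => //=; rewrite inl_eq.
- by rewrite ?(negbTE he) ?(negbTE ge) /= inl_eq.
Qed.
Lemma two_others (T : graph) (x : vert T) (g0 : edge T) : cubic T -> loopless T -> incident x g0 ->
  exists g1 g2, [/\ g1 != g2, g1 != g0, g2 != g0, incident x g1 & incident x g2].
Proof.
move=> cT lT xg0.
have : #|[set g | incident x g] :\ g0| == 2.
  have := cardsD1 g0 [set g | incident x g]; rewrite inc3 // inE xg0 /= => H3.
  by apply/eqP; lia.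
case/cards2P => g1 [g2 [g12 E]].
have : g1 \in [set g | incident x g] :\ g0 by rewrite E !inE eqxx.
have : g2 \in [set g | incident x g] :\ g0 by rewrite E !inE eqxx orbT.
rewrite !inE => /andP[g20 xg2] /andP[g10 xg1].
by exists g1, g2.
Qed.

Definition sum2M (c : edge K -> 'I_3) (i : 'I_3) (M : {set edge H}) : {set edge G} :=
  [set gs : edge G | match gs with inl g => g \in M | inr k => c k == i end].

Lemma cntL2 (c : edge K -> 'I_3) i (M : {set edge H}) (x0 : vert H) : loopless H -> (c f == i) = (e \in M) ->
  cnt (sum2M c i M) (inl x0) = cnt M x0.
Proof.
move=> lH Hi; rewrite !cnt_sum sumG !inE incLL incLR !eqxx /= Hi.
rewrite [X in _ + X = _]big1 ?addn0; last first.
  by move=> k kf; rewrite inE incLR (negbTE kf) andbF.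
rewrite (eq_bigr (fun g => ((g \in M) && incident x0 g) : nat)); last first.
  by move=> g ge; rewrite inE incLL (negbTE ge).
rewrite [in RHS](bigD1 e) //=.
case: (e \in M) => //=; rewrite incident_nl //; lia.
Qed.

Lemma cntR2 (c : edge K -> 'I_3) i (M : {set edge H}) (y : vert K) : loopless K -> (c f == i) = (e \in M) ->
  cnt (sum2M c i M) (inr y) = cnt [set k | c k == i] y.
Proof.
move=> lK Hi; rewrite !cnt_sum sumG !inE incRL incRR !eqxx /= -Hi.
rewrite [X in _ + X + _ = _]big1 ?addn0; last first.
  by move=> g ge; rewrite inE incRL (negbTE ge) andbF.
rewrite (eq_bigr (fun k => ((k \in [set k | c k == i]) && incident y k) : nat)); last first.
  by move=> k kf; rewrite !inE incRR (negbTE kf).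
rewrite [in RHS](bigD1 f) //= inE.
case: (c f == i) => //=; rewrite incident_nl //; case: sw; lia.
Qed.

Lemma good_sum2 (u : vert H) (c : edge K -> 'I_3) :
  cubic H -> loopless H -> cubic K -> loopless K -> proper3 c ->
  good_cover u 4 -> @good_cover G (inl u) 4.
Proof.
move=> cH lH cK lK pc [Ms [Hsz HM Hcov Hd]].
pose x := if a != u then a else b.
have xu : x != u.
  rewrite /x; case: ifP => // /negbFE /eqP au.
  by apply/eqP => bu; move: (lH e); rewrite /is_loop au bu eqxx.
have xe : incident x e by rewrite /x /incident; case: ifP; rewrite eqxx ?orbT.
have [g1 [g2 [g12 g1e g2e xg1 xg2]]] := two_others cH lH xe.
have [M1 HM1 g1M1] := Hcov g1; have [M2 HM2 g2M2] := Hcov g2.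
have cx : forall M, M \in Ms -> cnt M x = 1 by move=> M HMs; exact: (HM M HMs).1 x xu.
have eM1 : e \notin M1.
  apply/negP => eM; have := @cnt_two H M1 x e g1; rewrite eq_sym g1e cx //.
  by move/(_ isT eM g1M1 xe xg1).
have eM2 : e \notin M2.
  apply/negP => eM; have := @cnt_two H M2 x e g2; rewrite eq_sym g2e cx //.
  by move/(_ isT eM g2M2 xe xg2).
have M12 : M1 != M2.
  apply/eqP => E; have := @cnt_two H M1 x g1 g2; rewrite g12 cx //.
  by move/(_ isT g1M1); rewrite E => /(_ g2M2 xg1 xg2).
have [i2 i21] : exists i2 : 'I_3, i2 != c f by apply: other_gen; rewrite card_ord.
have i12 : c f != i2 by rewrite eq_sym.
have [i3 [i31 i32 Hall]] := third_gen (card_ord 3) i12.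
pose col (M : {set edge H}) := if e \in M then c f else if M == M1 then i2 else i3.
have colE : forall M : {set edge H}, (c f == col M) = (e \in M).
  move=> M; rewrite /col; case: (e \in M); first by rewrite eqxx.
  by case: (M == M1); rewrite eq_sym ?(negbTE i21) ?(negbTE i31).
exists (map (fun M => sum2M c (col M) M) Ms); split.
- by rewrite size_map.
- move=> M' /mapP[M HMs ->]; split.
    move=> [x0|y] Hx0.
      rewrite cntL2 ?colE //; apply: (HM M HMs).1.
      by apply: contra Hx0 => /eqP ->.
    by rewrite cntR2 ?colE //; exact: colour_class.
  by rewrite cntL2 ?colE //; exact: (HM M HMs).2.
- move=> [g|k].
    have [M HMs gM] := Hcov g; exists (sum2M c (col M) M); last by rewrite inE.
    by apply/mapP; exists M.
  move: (Hall (c k)) => /or3P[/eqP E|/eqP E|/eqP E].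
  + have [Me HMe eMe] := Hcov e; exists (sum2M c (col Me) Me).
      by apply/mapP; exists Me.
    by rewrite inE E /col eMe.
  + exists (sum2M c (col M1) M1); first by apply/mapP; exists M1.
    by rewrite inE E /col (negbTE eM1) eqxx.
  + exists (sum2M c (col M2) M2); first by apply/mapP; exists M2.
    have M21 : M2 != M1 by rewrite eq_sym.
    by rewrite inE E /col (negbTE eM2) (negbTE M21).
- move=> [g|k] Hinc.
    have Hg : incident u g.
      move: Hinc; rewrite incLL; case: (eqVneq g e) => [->|ge] //= /eqP <-.
      by rewrite /incident eqxx.
    have [M HMs /andP[gM /eqP cu]] := Hd g Hg.
    exists (sum2M c (col M) M); first by apply/mapP; exists M.
    by rewrite inE gM cntL2 ?colE // cu eqxx.
  move: Hinc; rewrite incLR => /andP[/eqP kf /eqP bu]; subst k.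
  have Hg : incident u e by rewrite /incident bu eqxx orbT.
  have [M HMs /andP[eM /eqP cu]] := Hd e Hg.
  exists (sum2M c (col M) M); first by apply/mapP; exists M.
  by rewrite inE colE eM cntL2 ?colE // cu eqxx.
Qed.
End Sum2Sec.

Lemma sum_sig (T : finType) (P : pred T) (F : T -> nat) :
  \sum_(x : {x | P x}) F (sval x) = \sum_(x | P x) F x.
Proof.
rewrite [RHS](reindex_omap (fun x : {x | P x} => sval x) insub).
  apply: eq_bigl => j; rewrite (proj2_sig j) /=.
  by rewrite (valK j) eqxx.
by move=> i Pi; rewrite insubT.
Qed.

Lemma exist_eq (T : eqType) (P : pred T) (a : T) (h : P a) (x : {x | P x}) :
  (exist (fun x => P x) a h == x) = (a == sval x).
Proof. by []. Qed.

Definition other (T : graph) (w : vert T) (g : edge T) :=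
  if (ends g).1 == w then (ends g).2 else (ends g).1.

Lemma sum_at (T : graph) (w : vert T) (Q : edge T -> vert T -> nat) : loopless T ->
  \sum_(d : dart T | dend d == w) Q d.1 (dend (flip d)) =
  \sum_(g | incident w g) Q g (other w g).
Proof.
move=> lT; rewrite big_mkcond /=.
transitivity (\sum_(p : edge T * bool)
   (if dend (p.1, p.2) == w then Q (p.1, p.2).1 (dend (flip (p.1, p.2))) else 0)).
  by apply: eq_bigr => -[].
rewrite -(pair_bigA _ (fun g b => if dend (g, b) == w then Q (g, b).1 (dend (flip (g, b))) else 0)) /=.
rewrite [RHS]big_mkcond; apply: eq_bigr => g _; rewrite big_bool /= /dend /flip /= /other /incident.
move: (lT g); rewrite /is_loop.
case: (eqVneq (ends g).1 w) => [->|h1]; case: (eqVneq (ends g).2 w) => [->|h2] //=.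
all: try (rewrite ?eqxx; done).
by rewrite addn0.
Qed.

Lemma other_inc (T : graph) (w x : vert T) (g : edge T) : loopless T -> incident w g -> x != w ->
  (other w g == x) = incident x g.
Proof.
move=> lT; move: (lT g); rewrite /is_loop /other /incident.
case: (eqVneq (ends g).1 w) => [->|h1] /=.
  by move=> _ _ xw; rewrite [w == x]eq_sym (negbTE xw).
by move=> _ /eqP -> xw; rewrite [w == x]eq_sym (negbTE xw) orbF.
Qed.

Lemma other_neq (T : graph) (w : vert T) (g : edge T) : loopless T -> incident w g ->
  other w g != w.
Proof.
move=> lT; move: (lT g); rewrite /is_loop /other /incident.
case: (eqVneq (ends g).1 w) => [->|h1] //=.
by rewrite eq_sym.
Qed.

Lemma card_darts (T : graph) (w : vert T) : cubic T -> \sum_(d : dart T | dend d == w) 1 = 3.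
Proof. move=> cT; rewrite sum1_card -(cT w) /deg; apply: eq_card => d; by rewrite !inE. Qed.

Lemma flip_neq (T : graph) (d : dart T) : loopless T -> dend (flip d) != dend d.
Proof.
move=> lT; case: d => g b; move: (lT g); rewrite /is_loop /dend /flip /=.
by case: b => //=; rewrite eq_sym.
Qed.

Lemma arith3 (pA nA pB nB : bool) (IH IK a a' b b' N : nat) :
  a + a' = 3 -> b + b' = 3 -> a <= N + b -> b <= N + a -> a' <= N + b' -> b' <= N + a' ->
  pA ==> (2 <= IH + a) -> nA ==> (2 <= IH + a') -> pB ==> (2 <= IK + b) -> nB ==> (2 <= IK + b') ->
  ~~ pA ==> (a == 0) -> ~~ nA ==> (a' == 0) -> ~~ pB ==> (b == 0) -> ~~ nB ==> (b' == 0) ->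
  pA || pB -> nA || nB -> 2 <= IH + IK + N.
Proof. by case: pA; case: nA; case: pB; case: nB => //=; lia. Qed.

Lemma cut_side (T : graph) (w : vert T) (A : {set vert T}) : loopless T -> w \notin A ->
  cross A = \sum_(g | ~~ incident w g) (((ends g).1 \in A) != ((ends g).2 \in A))
          + \sum_(d | dend d == w) ((dend (flip d) \in A) : nat).
Proof.
move=> lT wA; rewrite /cross (bigID (fun g => incident w g)) /= addnC; congr (_ + _).
have SA := @sum_at T w (fun _ z => (z \in A) : nat) lT; rewrite /= in SA; rewrite SA.
apply: eq_bigr => g wg; move: (other_neq lT wg); rewrite /other.
move: wg; rewrite /incident.
case: (eqVneq (ends g).1 w) => [->|h1] /=.
  by move=> _ _; rewrite (negbTE wA); case: (_ \in A).
by move/eqP => -> _; rewrite (negbTE wA); case: (_ \in A).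
Qed.

Lemma cut_side' (T : graph) (w : vert T) (A : {set vert T}) : loopless T -> w \notin A ->
  cross (w |: A) = \sum_(g | ~~ incident w g) (((ends g).1 \in A) != ((ends g).2 \in A))
          + \sum_(d | dend d == w) ((dend (flip d) \notin A) : nat).
Proof.
move=> lT wA; rewrite /cross (bigID (fun g => incident w g)) /= addnC; congr (_ + _).
  apply: eq_bigr => g; rewrite /incident negb_or => /andP[h1 h2].
  by rewrite !inE eq_sym (negbTE h1) eq_sym (negbTE h2).
have SA := @sum_at T w (fun _ z => (z \notin A) : nat) lT; rewrite /= in SA; rewrite SA.
apply: eq_bigr => g wg; move: (other_neq lT wg); rewrite /other.
move: wg; rewrite /incident.
case: (eqVneq (ends g).1 w) => [->|h1] /=.
  by move=> _ H2; rewrite !inE eqxx /= eq_sym (negbTE H2) /=; case: (_ \in A).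
by move/eqP => -> _; rewrite !inE eqxx eq_sym (negbTE h1) /=; case: (_ \in A).
Qed.

Lemma dv_flip (T : graph) (w : vert T) (g : edge T) : dend (flip (dv w g)) = other w g.
Proof. by rewrite /dv /other; case: ifP. Qed.

Lemma dv_fst (T : graph) (w : vert T) (g : edge T) : (dv w g).1 = g.
Proof. by rewrite /dv; case: ifP. Qed.

Lemma dv_notat (T : graph) (w : vert T) (g : edge T) : ~~ incident w g -> dend (dv w g) != w.
Proof.
rewrite /dv /incident negb_or => /andP[h1 h2].
by case: ifP => _; rewrite /dend /= ?h1 ?h2.
Qed.

Lemma odd_pred_even n : 0 < n -> ~~ odd n -> odd n.-1.
Proof. by case: n => //= n _; rewrite negbK. Qed.

Lemma darts_eq (T : graph) (w : vert T) (d d' : dart T) : loopless T ->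
  dend d == w -> dend d' == w -> d.1 = d'.1 -> d = d'.
Proof.
move=> lT; case: d => g b; case: d' => g' b' /= Hd Hd' E; subst g'.
case: (eqVneq b b') => [->//|ne]; move: (lT g) Hd Hd'; rewrite /is_loop /dend /=.
by case: b ne; case: b' => //= _ H /eqP E1 /eqP E2; rewrite E1 E2 eqxx in H.
Qed.

Lemma inc_dend (T : graph) (d : dart T) : incident (dend d) d.1.
Proof. by case: d => g b; rewrite /incident /dend /=; case: b; rewrite eqxx ?orbT. Qed.

Section Sum3Sec.
Variables (H K : graph) (u' : vert H) (v' : vert K) (phi : dart H -> dart K).
Local Notation G := (@sum3 H K u' v' phi).
Local Notation SN := {d : dart H | s3new u' v' phi d}.

Lemma inc3LL (x : {x | x != u'}) (g : {g | ~~ incident u' g}) :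
  @incident G (inl x) (inl (inl g)) = incident (sval x) (sval g).
Proof. by rewrite /incident /= !inl_eq !exist_eq. Qed.
Lemma inc3LK (x : {x | x != u'}) (k : {k | ~~ incident v' k}) :
  @incident G (inl x) (inl (inr k)) = false.
Proof. by []. Qed.
Lemma inc3LN (x : {x | x != u'}) (d : SN) :
  @incident G (inl x) (inr d) = (dend (flip (sval d)) == sval x).
Proof. by rewrite /incident /= !inl_eq !exist_eq orbF. Qed.
Lemma inc3RH (y : {y | y != v'}) (g : {g | ~~ incident u' g}) :
  @incident G (inr y) (inl (inl g)) = false.
Proof. by []. Qed.
Lemma inc3RK (y : {y | y != v'}) (k : {k | ~~ incident v' k}) :
  @incident G (inr y) (inl (inr k)) = incident (sval y) (sval k).
Proof. by rewrite /incident /= !inr_eq !exist_eq. Qed.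
Lemma inc3RN (y : {y | y != v'}) (d : SN) :
  @incident G (inr y) (inr d) = (dend (flip (phi (sval d))) == sval y).
Proof. by rewrite /incident /= !inr_eq !exist_eq. Qed.

Lemma sumG3 (F : edge G -> nat) :
  \sum_(g' : edge G) F g' =
  \sum_(g : {g | ~~ incident u' g}) F (inl (inl g)) + \sum_(k : {k | ~~ incident v' k}) F (inl (inr k))
  + \sum_(d : SN) F (inr d).
Proof. by rewrite !big_sumType. Qed.

Lemma s3new_iff : loopless H -> loopless K -> bij_darts u' v' phi ->
  forall d, s3new u' v' phi d = (dend d == u').
Proof.
move=> lH lK [B1 B2 B3] d; rewrite /s3new.
case: (eqVneq (dend d) u') => [du|du] //=.
have Hp := B1 d (introT eqP du).
rewrite -{1}du flip_neq //= -(eqP Hp); exact: flip_neq.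
Qed.

Lemma sumSN (F : dart H -> nat) : loopless H -> loopless K -> bij_darts u' v' phi ->
  \sum_(d : SN) F (sval d) = \sum_(d | dend d == u') F d.
Proof.
move=> lH lK B; rewrite sum_sig; apply: eq_bigl => d; exact: s3new_iff.
Qed.

Lemma sum_phi (F : dart K -> nat) : bij_darts u' v' phi ->
  \sum_(d | dend d == u') F (phi d) = \sum_(d' | dend d' == v') F d'.
Proof.
move=> [B1 B2 B3].
pose A := [set d : dart H | dend d == u'].
have E : phi @: A = [set d' : dart K | dend d' == v'].
  apply/setP => d'; rewrite inE; apply/imsetP/idP => [[d]|Hd'].
    by rewrite inE => Hd ->; apply: B1.
  by have [d Hd <-] := B3 d' Hd'; exists d; rewrite ?inE.
have inj : {in A &, injective phi} by move=> x y; rewrite !inE; apply: B2.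
transitivity (\sum_(d in A) F (phi d)); first by apply: eq_bigl => d; rewrite inE.
rewrite -(big_imset _ inj) E; apply: eq_bigl => d'; by rewrite inE.
Qed.

Lemma deg_split (T : graph) (w x : vert T) : loopless T -> x != w ->
  deg x = \sum_(g | ~~ incident w g) (((ends g).1 == x) + ((ends g).2 == x))
        + \sum_(d | dend d == w) ((dend (flip d) == x) : nat).
Proof.
move=> lT xw; rewrite deg_sum (bigID (fun g => incident w g)) /= addnC; congr (_ + _).
have SA := @sum_at T w (fun _ z => (z == x) : nat) lT; rewrite /= in SA; rewrite SA.
by apply: eq_bigr => g wg; rewrite other_inc // incident_nl.
Qed.

Lemma cubic_sum3 : cubic H -> cubic K -> loopless H -> loopless K -> bij_darts u' v' phi ->
  cubic G.
Proof.
move=> cH cK lH lK B [x|y]; rewrite deg_sum sumG3.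
- rewrite [X in _ + X + _]big1 ?addn0; last by move=> k _; rewrite /= ?inrl_eq.
  rewrite -(cH (sval x)) (deg_split lH (proj2_sig x)); congr (_ + _).
    rewrite -(sum_sig (fun g => ~~ incident u' g) (fun g => ((ends g).1 == sval x) + ((ends g).2 == sval x))).
    by apply: eq_bigr => g _; rewrite /= !inl_eq !exist_eq.
  rewrite -(sumSN (fun d => (dend (flip d) == sval x) : nat)) //.
  by apply: eq_bigr => d _; rewrite /= inl_eq exist_eq ?inrl_eq addn0.
- rewrite [X in X + _ + _]big1 ?add0n; last by move=> g _; rewrite /= ?inlr_eq.
  rewrite -(cK (sval y)) (deg_split lK (proj2_sig y)); congr (_ + _).
    rewrite -(sum_sig (fun g => ~~ incident v' g) (fun g => ((ends g).1 == sval y) + ((ends g).2 == sval y))).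
    by apply: eq_bigr => g _; rewrite /= !inr_eq !exist_eq.
  rewrite -(sum_phi (fun d => (dend (flip d) == sval y) : nat)) //.
  rewrite -(sumSN (fun d => (dend (flip (phi d)) == sval y) : nat)) //;
  try by apply: eq_bigr => d _; rewrite /= inr_eq exist_eq ?inlr_eq.
Qed.

Lemma two_conn_sum3 : two_connected H -> two_connected K -> cubic H ->
  loopless H -> loopless K -> bij_darts u' v' phi -> two_connected G.
Proof.
move=> tH tK cH lH lK Hb; apply: two_conn_of_cut => S x y xS yS.
pose A := [set z : vert H | if (insub z : option {x : vert H | x != u'}) is Some z'
                            then (inl z' : vert G) \in S else false].
pose B := [set z : vert K | if (insub z : option {y : vert K | y != v'}) is Some z'
                            then (inr z' : vert G) \in S else false].
have memA : forall z' : {x : vert H | x != u'}, (sval z' \in A) = (inl z' \in S).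
  by move=> [z hz]; rewrite inE /= (insubT (fun x => x != u') hz).
have memB : forall z' : {y : vert K | y != v'}, (sval z' \in B) = (inr z' \in S).
  by move=> [z hz]; rewrite inE /= (insubT (fun x => x != v') hz).
have uA : u' \notin A by rewrite inE insubF ?eqxx.
have vB : v' \notin B by rewrite inE insubF ?eqxx.
set IH := \sum_(g | ~~ incident u' g) (((ends g).1 \in A) != ((ends g).2 \in A)).
set IK := \sum_(k | ~~ incident v' k) (((ends k).1 \in B) != ((ends k).2 \in B)).
set a := \sum_(d | dend d == u') ((dend (flip d) \in A) : nat).
set a' := \sum_(d | dend d == u') ((dend (flip d) \notin A) : nat).
set b := \sum_(d | dend d == u') ((dend (flip (phi d)) \in B) : nat).
set b' := \sum_(d | dend d == u') ((dend (flip (phi d)) \notin B) : nat).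
set N := \sum_(d | dend d == u') ((dend (flip d) \in A) != (dend (flip (phi d)) \in B)).
have EG : cross S = IH + IK + N.
  rewrite /cross sumG3; congr (_ + _ + _).
  - rewrite /IH -(sum_sig (fun g => ~~ incident u' g)
       (fun g => ((ends g).1 \in A) != ((ends g).2 \in A))).
    by apply: eq_bigr => g _; rewrite /= -!memA.
  - rewrite /IK -(sum_sig (fun k => ~~ incident v' k)
       (fun k => ((ends k).1 \in B) != ((ends k).2 \in B))).
    by apply: eq_bigr => k _; rewrite /= -!memB.
  - rewrite /N -(sumSN (fun d => (dend (flip d) \in A) != (dend (flip (phi d)) \in B))) //.
    by apply: eq_bigr => d _; rewrite /= -memA -memB.
have EHa : cross A = IH + a by exact: cut_side.
have EHa' : cross (u' |: A) = IH + a' by exact: cut_side'.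
have EKb : cross B = IK + b.
  rewrite (cut_side lK vB) /b (sum_phi (fun d => (dend (flip d) \in B) : nat)) //.
have EKb' : cross (v' |: B) = IK + b'.
  rewrite (cut_side' lK vB) /b' (sum_phi (fun d => (dend (flip d) \notin B) : nat)) //.
have Haa : a + a' = 3.
  rewrite /a /a' -big_split /= -(card_darts u' cH); apply: eq_bigr => d _.
  by case: (_ \in A).
have Hbb : b + b' = 3.
  rewrite /b /b' -big_split /= -(card_darts u' cH); apply: eq_bigr => d _.
  by case: (_ \in B).
have h1 : a <= N + b.
  rewrite /a /N /b -big_split; apply: leq_sum => d _.
  by case: (_ \in A); case: (_ \in B).
have h2 : b <= N + a.
  rewrite /a /N /b -big_split; apply: leq_sum => d _.
  by case: (_ \in A); case: (_ \in B).
have h3 : a' <= N + b'.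
  rewrite /a' /N /b' -big_split; apply: leq_sum => d _.
  by case: (_ \in A); case: (_ \in B).
have h4 : b' <= N + a'.
  rewrite /a' /N /b' -big_split; apply: leq_sum => d _.
  by case: (_ \in A); case: (_ \in B).
rewrite EG; apply: (@arith3 [exists p, p \in A] [exists q, (q != u') && (q \notin A)]
                [exists p, p \in B] [exists q, (q != v') && (q \notin B)] IH IK a a' b b' N) => //.
- apply/implyP => /existsP[p pA]; rewrite -EHa; exact: (cut_of_2conn tH pA uA).
- apply/implyP => /existsP[q /andP[qu qA]]; rewrite -EHa'.
  apply: (cut_of_2conn tH (x:=u') (y:=q)); first by rewrite setU11.
  by rewrite in_setU1 negb_or qu qA.
- apply/implyP => /existsP[p pB]; rewrite -EKb; exact: (cut_of_2conn tK pB vB).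
- apply/implyP => /existsP[q /andP[qv qB]]; rewrite -EKb'.
  apply: (cut_of_2conn tK (x:=v') (y:=q)); first by rewrite setU11.
  by rewrite in_setU1 negb_or qv qB.
- apply/implyP; rewrite negb_exists => /forallP Hn; apply/eqP.
  by rewrite /a big1 // => d _; rewrite (negbTE (Hn _)).
- apply/implyP; rewrite negb_exists => /forallP Hn; apply/eqP.
  rewrite /a' big1 // => d /eqP du.
  have := Hn (dend (flip d)); rewrite negb_and negbK -du (negbTE (flip_neq d lH)) /=.
  by case: (_ \in A).
- apply/implyP; rewrite negb_exists => /forallP Hn; apply/eqP.
  by rewrite /b big1 // => d _; rewrite (negbTE (Hn _)).
- apply/implyP; rewrite negb_exists => /forallP Hn; apply/eqP.
  rewrite /b' big1 // => d /eqP du.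
  have Hp : dend (phi d) = v' by apply/eqP; case: Hb => B1 _ _; apply: B1; rewrite du.
  have := Hn (dend (flip (phi d))); rewrite negb_and negbK -Hp (negbTE (flip_neq (phi d) lK)) /=.
  by case: (_ \in B).
- case: x xS => [x'|y'] xS; apply/orP; [left|right]; apply/existsP.
    by exists (sval x'); rewrite memA.
  by exists (sval y'); rewrite memB.
- case: y yS => [x'|y'] yS; apply/orP; [left|right]; apply/existsP.
    by exists (sval x'); rewrite memA yS (proj2_sig x').
  by exists (sval y'); rewrite memB yS (proj2_sig y').
Qed.

Lemma nocol_sum3 : cubic H -> cubic K -> loopless H -> loopless K -> bij_darts u' v' phi ->
  ~ col3 H -> ~ col3 G.
Proof.
move=> cH cK lH lK Hb nH [c [lG pc]].
have cG := cubic_sum3 cH cK lH lK Hb.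
pose S := [set z : vert G | if z is inl _ then true else false].
have oddS : odd #|S|.
  have -> : #|S| = #|{: {x : vert H | x != u'}}|.
    exact: (card_inl {x : vert H | x != u'} {y : vert K | y != v'}).
  rewrite card_sig cardC1; apply: odd_pred_even; last exact: handshake.
  by apply/card_gt0P; exists u'.
pose n (i : 'I_3) := \sum_(d : SN) (c (inr d) == i).
have par : forall i, odd (n i).
  move=> i.
  have E : n i = \sum_(g : edge G) ((c g == i) && (((ends g).1 \in S) != ((ends g).2 \in S))).
    rewrite sumG3.
    rewrite big1 ?add0n; last by move=> g _; rewrite !inE /= andbF.
    rewrite big1 ?add0n; last by move=> k _; rewrite !inE /= andbF.
    by rewrite /n; apply: eq_bigr => d _; rewrite !inE /= andbT.
  by rewrite E -(parity cG lG pc S i) oddS.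
have tot : \sum_(i : 'I_3) n i = 3.
  rewrite /n exchange_big /=.
  transitivity (\sum_(d : SN) 1); first by apply: eq_bigr => d _; rewrite sum_eq1.
  rewrite (sumSN (fun _ => 1)) //; exact: card_darts.
have n1 : forall i, n i = 1.
  move=> i; have := par i; move: tot; rewrite (bigD1 i) //=.
  have : \sum_(j | j != i) 1 <= \sum_(j | j != i) n j.
    by apply: leq_sum => j _; have := par j; case: (n j).
  rewrite sum1_card cardC1 card_ord /=.
  case: (n i) => [|[|k]] //=; lia.
have cinj : forall d1 d2 : SN, d1 != d2 -> c (inr d1) != c (inr d2).
  move=> d1 d2 d12; apply/negP => /eqP E.
  have := n1 (c (inr d1)); rewrite /n (bigD1 d1) //= eqxx (bigD1 d2) /=; last by rewrite eq_sym.
  rewrite -E eqxx; lia.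
have [d0 d0u] : exists d0 : dart H, dend d0 == u'.
  have : 0 < deg u' by rewrite cH.
  by rewrite /deg => /card_gt0P [d0]; rewrite inE => d0u; exists d0.
have sn0 : s3new u' v' phi d0 by rewrite s3new_iff.
pose g0 : edge G := inr (exist _ d0 sn0).
pose tau (g : edge H) : edge G :=
  if (insub (dv u' g) : option SN) is Some d then inr d
  else if (insub g : option {g | ~~ incident u' g}) is Some g' then inl (inl g') else g0.
have tau_at : forall g, incident u' g -> exists d : SN, tau g = inr d /\ sval d = dv u' g.
  move=> g ug; have sn : s3new u' v' phi (dv u' g) by rewrite s3new_iff // dv_at.
  by exists (exist _ (dv u' g) sn); rewrite /tau (insubT (fun d => s3new u' v' phi d) sn).
have tau_not : forall g, ~~ incident u' g ->
    exists g' : {g | ~~ incident u' g}, tau g = inl (inl g') /\ sval g' = g.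
  move=> g ug; exists (exist _ g ug); rewrite /tau insubF.
    by rewrite (insubT (fun g => ~~ incident u' g) ug).
  by rewrite s3new_iff //; apply/negbTE/dv_notat.
have tau_inj : forall g h, g != h -> tau g != tau h.
  move=> g h gh; case: (boolP (incident u' g)) => ug; case: (boolP (incident u' h)) => uh.
  - have [dg [-> Hg]] := tau_at g ug; have [dh [-> Hh]] := tau_at h uh.
    rewrite inr_eq; apply: contra gh => /eqP E.
    by rewrite -(dv_fst u' g) -(dv_fst u' h) -Hg -Hh E.
  - have [dg [-> Hg]] := tau_at g ug; have [h' [-> Hh]] := tau_not h uh.
    by rewrite inrl_eq.
  - have [g' [-> Hg]] := tau_not g ug; have [dh [-> Hh]] := tau_at h uh.
    by rewrite inlr_eq.
  - have [g' [-> Hg]] := tau_not g ug; have [h' [-> Hh]] := tau_not h uh.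
    rewrite !inl_eq; apply: contra gh => /eqP E.
    by rewrite -Hg -Hh E.
apply: nH; exists (fun g => c (tau g)); split => // x g h gh xg xh.
case: (eqVneq x u') => [xu|xu].
  subst x; have [dg [Eg Hg]] := tau_at g xg; have [dh [Eh Hh]] := tau_at h xh.
  rewrite Eg Eh; apply: cinj; apply: contra gh => /eqP E.
  by rewrite -(dv_fst u' g) -(dv_fst u' h) -Hg -Hh E.
pose x' := exist (fun x => x != u') x xu.
have inc_tau : forall g1, incident x g1 -> @incident G (inl x') (tau g1).
  move=> g1 xg1; case: (boolP (incident u' g1)) => ug1.
    have [d [-> Hd]] := tau_at g1 ug1; rewrite inc3LN Hd dv_flip /=.
    by rewrite other_inc.
  by have [g' [-> Hg']] := tau_not g1 ug1; rewrite inc3LL Hg' /=.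
by apply: (pc (inl x')); [exact: tau_inj | exact: inc_tau | exact: inc_tau].
Qed.

Definition colM (c : edge K -> 'I_3) (M : {set edge H}) : 'I_3 :=
  if [pick g | (g \in M) && incident u' g] is Some g then c (phi (dv u' g)).1 else ord0.

Definition sum3M (c : edge K -> 'I_3) (M : {set edge H}) : {set edge G} :=
  [set gs : edge G | match gs with
                     | inl (inl g) => sval g \in M
                     | inl (inr k) => c (sval k) == colM c M
                     | inr d => (sval d).1 \in M
                     end].

Lemma consist (c : edge K -> 'I_3) (M : {set edge H}) :
  loopless H -> loopless K -> proper3 c -> bij_darts u' v' phi -> cnt M u' = 1 ->
  forall d, dend d == u' -> (d.1 \in M) = (c (phi d).1 == colM c M).
Proof.
move=> lH lK pc [B1 B2 B3] cu d du.
rewrite /colM; case: pickP => [g0 /andP[g0M g0u]|none]; last first.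
  exfalso; have : 0 < cnt M u' by rewrite cu.
  by case/card_gt0P => g0; rewrite inE => H0; move: (none g0); rewrite H0.
pose d0 := dv u' g0.
have d0u : dend d0 == u' by apply: dv_at.
have E1 : (d.1 \in M) = (d == d0).
  apply/idP/eqP => [dM|->]; last by rewrite /d0 dv_fst.
  apply: (darts_eq lH du d0u); rewrite /d0 dv_fst.
  apply/eqP/negPn/negP => ne.
  have i1 : incident u' d.1 by move: (inc_dend d); rewrite (eqP du).
  by have := @cnt_two H M u' d.1 g0 ne dM g0M i1 g0u; rewrite cu.
rewrite E1; apply/eqP/eqP => [->//|Ec].
apply/eqP/negPn/negP => ne.
have pne : phi d != phi d0.
  by apply: contra ne => /eqP E; apply/eqP; apply: B2; rewrite ?inE.
have ene : (phi d).1 != (phi d0).1.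
  by apply: contra pne => /eqP E; apply/eqP; apply: (darts_eq lK (B1 _ du) (B1 _ d0u) E).
have := pc v' _ _ ene.
have i1 : incident v' (phi d).1 by move: (inc_dend (phi d)); rewrite (eqP (B1 _ du)).
have i2 : incident v' (phi d0).1 by move: (inc_dend (phi d0)); rewrite (eqP (B1 _ d0u)).
by move/(_ i1 i2); rewrite Ec eqxx.
Qed.

Lemma cntL3 (c : edge K -> 'I_3) (M : {set edge H}) (x : {x | x != u'}) :
  loopless H -> loopless K -> bij_darts u' v' phi ->
  cnt (sum3M c M) (inl x) = cnt M (sval x).
Proof.
move=> lH lK Hb; rewrite !cnt_sum sumG3.
rewrite [X in _ + X + _]big1 ?addn0; last by move=> k _; rewrite inc3LK andbF.
rewrite [RHS](bigID (fun g => incident u' g)) /= [RHS]addnC; congr (_ + _).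
  rewrite -(sum_sig (fun g => ~~ incident u' g) (fun g => (g \in M) && incident (sval x) g)).
  by apply: eq_bigr => g _; rewrite inE inc3LL.
transitivity (\sum_(d : SN) (((sval d).1 \in M) && (dend (flip (sval d)) == sval x)) : nat).
  by apply: eq_bigr => d _; rewrite inE inc3LN.
rewrite (sumSN (fun d => ((d.1 \in M) && (dend (flip d) == sval x)) : nat)) //.
  have SA := @sum_at H u' (fun g z => ((g \in M) && (z == sval x)) : nat) lH.
  rewrite /= in SA; rewrite SA.
  by apply: eq_bigr => g ug; rewrite other_inc // (proj2_sig x).
Qed.

Lemma cntR3 (c : edge K -> 'I_3) (M : {set edge H}) (y : {y | y != v'}) :
  loopless H -> loopless K -> proper3 c -> bij_darts u' v' phi -> cnt M u' = 1 ->
  cnt (sum3M c M) (inr y) = cnt [set k | c k == colM c M] (sval y).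
Proof.
move=> lH lK pc Hb cu; rewrite !cnt_sum sumG3.
rewrite [X in X + _ + _]big1 ?add0n; last by move=> g _; rewrite inc3RH andbF.
rewrite [RHS](bigID (fun k => incident v' k)) /= [RHS]addnC; congr (_ + _).
  rewrite -(sum_sig (fun k => ~~ incident v' k)
             (fun k => (k \in [set k | c k == colM c M]) && incident (sval y) k)).
  by apply: eq_bigr => k _; rewrite !inE inc3RK.
transitivity (\sum_(d : SN) (((sval d).1 \in M) && (dend (flip (phi (sval d))) == sval y)) : nat).
  by apply: eq_bigr => d _; rewrite inE inc3RN.
rewrite (sumSN (fun d => ((d.1 \in M) && (dend (flip (phi d)) == sval y)) : nat)) //.
transitivity (\sum_(d | dend d == u')
                ((c (phi d).1 == colM c M) && (dend (flip (phi d)) == sval y)) : nat).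
  by apply: eq_bigr => d du; rewrite (consist lH lK pc Hb cu du).
rewrite (sum_phi (fun d' => ((c d'.1 == colM c M) && (dend (flip d') == sval y)) : nat)) //.
have SA := @sum_at K v' (fun k z => ((c k == colM c M) && (z == sval y)) : nat) lK.
rewrite /= in SA; rewrite SA.
by apply: eq_bigr => k vk; rewrite other_inc // ?(proj2_sig y) // inE.
Qed.

Lemma good_sum3 (u : vert H) (hu : u != u') (c : edge K -> 'I_3) :
  cubic H -> loopless H -> cubic K -> loopless K -> proper3 c -> bij_darts u' v' phi ->
  good_cover u 4 -> @good_cover G (inl (exist (fun x => x != u') u hu)) 4.
Proof.
move=> cH lH cK lK pc Hb [Ms [Hsz HM Hcov Hd]].
have cu : forall M, M \in Ms -> cnt M u' = 1.
  by move=> M HMs; apply: (HM M HMs).1; rewrite eq_sym.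
have cLu : forall M, cnt (sum3M c M) (inl (exist (fun x => x != u') u hu)) = cnt M u.
  by move=> M; rewrite cntL3.
exists (map (sum3M c) Ms); split.
- by rewrite size_map.
- move=> M' /mapP[M HMs ->]; split.
    move=> [x|y] Hz.
      rewrite cntL3 //; apply: (HM M HMs).1.
      apply: contra Hz => /eqP E; apply/eqP; congr inl; exact: val_inj.
    by rewrite cntR3 ?cu //; exact: colour_class.
  by rewrite cLu; exact: (HM M HMs).2.
- move=> [[g|k]|d].
  + have [M HMs gM] := Hcov (sval g); exists (sum3M c M); first by apply/mapP; exists M.
    by rewrite inE.
  + have : 0 < cnt [set k0 | c k0 == c (sval k)] v' by rewrite colour_class.
    case/card_gt0P => k0; rewrite !inE => /andP[/eqP ck0 vk0].
    have [B1 B2 B3] := Hb.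
    have [d0 d0u Ed0] := B3 (dv v' k0) (dv_at vk0).
    have [M HMs d0M] := Hcov d0.1.
    exists (sum3M c M); first by apply/mapP; exists M.
    have E := consist lH lK pc Hb (cu M HMs) d0u.
    rewrite d0M Ed0 dv_fst ck0 in E.
    by rewrite inE -E.
  + have [M HMs dM] := Hcov (sval d).1; exists (sum3M c M); first by apply/mapP; exists M.
    by rewrite inE.
- move=> [[g|k]|d] Hinc.
  + rewrite inc3LL /= in Hinc.
    have [M HMs /andP[gM /eqP c1]] := Hd _ Hinc.
    exists (sum3M c M); first by apply/mapP; exists M.
    by rewrite inE gM cLu c1.
  + by rewrite inc3LK in Hinc.
  + rewrite inc3LN /= in Hinc.
    have Hu : incident u (sval d).1.
      by have := inc_dend (flip (sval d)); rewrite (eqP Hinc).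
    have [M HMs /andP[dM /eqP c1]] := Hd _ Hu.
    exists (sum3M c M); first by apply/mapP; exists M.
    by rewrite inE dM cLu c1.
Qed.

End Sum3Sec.

Unset Implicit Arguments.

Theorem lemma6p6 (H K : graph) :
  two_connected H -> cubic H -> two_connected K -> cubic K ->
  snark H -> pmi_ge H 5 -> col3 K ->
  (forall (e : edge H) (f : edge K) (sw : bool) (u : vert H),
      apex u -> @apex (sum2 e f sw) (inl u)) /\
  (forall (u' : vert H) (v' : vert K) (phi : dart H -> dart K),
      bij_darts u' v' phi ->
      forall (u : vert H) (hu : u != u'),
        apex u -> @apex (sum3 u' v' phi) (@sum3_vH H K u' v' phi u hu)).
Proof.
move=> tH cH tK cK [_ [_ nH]] _ [c [_ pc]].
have lH := loopless_of cH tH; have lK := loopless_of cK tK.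
have pc' : proper3 c by exact: pc.
split.
- move=> e f sw u [_ [Hcov4 _]].
  have gc := infl_to_good cH lH Hcov4.
  have cG := @cubic_sum2 H K e f sw cH cK.
  have tG := two_conn_sum2 e f sw tH tK.
  have lG := loopless_of cG tG.
  have nG := @nocol_sum2 H K e f sw cH cK lH nH.
  split; first by split => //; split.
  split.
    by apply: good_to_infl cG lG _; apply: good_sum2 cH lH cK lK pc' gc.
  move=> m Hm; have gm := infl_to_good cG lG Hm.
  rewrite leqNgt; apply/negP => Hlt; apply: nG.
  by apply: (good_col3 cG lG gm); lia.
- move=> u' v' phi Hb u hu [_ [Hcov4 _]].
  have gc := infl_to_good cH lH Hcov4.
  have cG := @cubic_sum3 H K u' v' phi cH cK lH lK Hb.
  have tG := @two_conn_sum3 H K u' v' phi tH tK cH lH lK Hb.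
  have lG := loopless_of cG tG.
  have nG := @nocol_sum3 H K u' v' phi cH cK lH lK Hb nH.
  split; first by split => //; split.
  split.
    by apply: good_to_infl cG lG _; exact: (@good_sum3 H K u' v' phi u hu c cH lH cK lK pc' Hb gc).
  move=> m Hm; have gm := infl_to_good cG lG Hm.
  rewrite leqNgt; apply/negP => Hlt; apply: nG.
  by apply: (good_col3 cG lG gm); lia.
Qed.
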